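(* Let $\mathcal{A}=(A,0^\mathcal{A},1^\mathcal{A},\land^\mathcal{A},\lor^\mathcal{A},\to^\mathcal{A})$ be an algebraic interpretation. (1) If $\mathcal{A}$ is consistent with $\vdash_\mathsf{IPC}$, then $\mathcal{A}$ is a Heyting algebra. (2) If $\mathcal{A}$ is consistent with $\vdash_\mathsf{CPC}$, then, defining $a'=a\to^\mathcal{A}0^\mathcal{A}$, the structure $(A,0^\mathcal{A},1^\mathcal{A},\land^\mathcal{A},\lor^\mathcal{A},')$ is a Boolean algebra.
   Context: The language is generated from a countably infinite set $\mathit{Prop}$ of variables by $\bot,\top,\land,\lor,\to$; $\vdash_\mathsf{IPC}$ and $\vdash_\mathsf{CPC}$ are the intuitionistic and classical propositional consequence relations. An algebraic interpretation is any structure $\mathcal{A}=(A,0^\mathcal{A},1^\mathcal{A},\land^\mathcal{A},\lor^\mathcal{A},\to^\mathcal{A})$ (two constants, three binary operations) such that the relation $a\leq^\mathcal{A}b\iff a\land^\mathcal{A}b=a$ is a partial order on $A$ having $1^\mathcal{A}$ as largest element; no other conditions are imposed. A valuation is a map $v:\mathit{Prop}\to A$, and $[\![\varphi]\!]_v$ is the value of $\varphi$ under the unique homomorphic extension of $v$ ($\bot\mapsto0^\mathcal{A}$, $\top\mapsto1^\mathcal{A}$, connectives to the corresponding operations). $\mathcal{A}$ is consistent with $\vdash$ if whenever $\psi_1,\ldots,\psi_n\vdash\varphi$, for every valuation $v$ and every $c\in A$, if $c\leq^\mathcal{A}[\![\psi_i]\!]_v$ for all $i=1,\ldots,n$ then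 $c\leq^\mathcal{A}[\![\varphi]\!]_v$ (for $n=0$ this means $[\![\varphi]\!]_v=1^\mathcal{A}$). *)

(* Defs.v *)
From Stdlib Require Import List.
Import ListNotations.

Inductive form : Type :=
| Var : nat -> form
| Bot : form
| Top : form
| And : form -> form -> form
| Or  : form -> form -> form
| Imp : form -> form -> form.

Inductive ipc_axiom : form -> Prop :=
| ax_K  : forall a b, ipc_axiom (Imp a (Imp b a))
| ax_S  : forall a b c,
    ipc_axiom (Imp (Imp a (Imp b c)) (Imp (Imp a b) (Imp a c)))
| ax_andE1 : forall a b, ipc_axiom (Imp (And a b) a)
| ax_andE2 : forall a b, ipc_axiom (Imp (And a b) b)
| ax_andI  : forall a b, ipc_axiom (Imp a (Imp b (And a b)))
| ax_orI1  : forall a b, ipc_axiom (Imp a (Or a b))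
| ax_orI2  : forall a b, ipc_axiom (Imp b (Or a b))
| ax_orE   : forall a b c,
    ipc_axiom (Imp (Imp a c) (Imp (Imp b c) (Imp (Or a b) c)))
| ax_efq   : forall a, ipc_axiom (Imp Bot a)
| ax_top   : ipc_axiom Top.

Inductive cpc_axiom : form -> Prop :=
| ax_ipc : forall a, ipc_axiom a -> cpc_axiom a
| ax_lem : forall a, cpc_axiom (Or a (Imp a Bot)).

Inductive derivable (ax : form -> Prop) (G : list form) : form -> Prop :=
| d_hyp : forall a, In a G -> derivable ax G a
| d_ax  : forall a, ax a -> derivable ax G a
| d_mp  : forall a b, derivable ax G (Imp a b) -> derivable ax G a ->
          derivable ax G b.

Definition IPC_entails (G : list form) (a : form) : Prop := derivable ipc_axiom G a.
Definition CPC_entails (G : list form) (a : form) : Prop := derivable cpc_axiom G a.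

Section Alg.
Variables (A : Type) (zero one : A) (meet join imp : A -> A -> A).

Definition le (a b : A) : Prop := meet a b = a.

Definition is_alg_interp : Prop :=
  (forall a, le a a) /\
  (forall a b, le a b -> le b a -> a = b) /\
  (forall a b c, le a b -> le b c -> le a c) /\
  (forall a, le a one).

Fixpoint eval (v : nat -> A) (f : form) : A :=
  match f with
  | Var p => v p
  | Bot => zero
  | Top => one
  | And a b => meet (eval v a) (eval v b)
  | Or a b => join (eval v a) (eval v b)
  | Imp a b => imp (eval v a) (eval v b)
  end.

Definition consistent_with (ent : list form -> form -> Prop) : Prop :=
  forall (G : list form) (phi : form), ent G phi ->
  forall (v : nat -> A) (c : A),
    (forall psi, In psi G -> le c (eval v psi)) -> le c (eval v phi).

Definition is_bounded_lattice : Prop :=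
  (forall a, le a a) /\
  (forall a b, le a b -> le b a -> a = b) /\
  (forall a b c, le a b -> le b c -> le a c) /\
  (forall a b, le (meet a b) a /\ le (meet a b) b) /\
  (forall a b c, le c a -> le c b -> le c (meet a b)) /\
  (forall a b, le a (join a b) /\ le b (join a b)) /\
  (forall a b c, le a c -> le b c -> le (join a b) c) /\
  (forall a, le zero a) /\
  (forall a, le a one).

Definition is_heyting_algebra : Prop :=
  is_bounded_lattice /\
  (forall a b c, le c (imp a b) <-> le (meet c a) b).

Definition is_boolean_algebra (compl : A -> A) : Prop :=
  is_bounded_lattice /\
  (forall a b c, meet a (join b c) = join (meet a b) (meet a c)) /\
  (forall a, meet a (compl a) = zero /\ join a (compl a) = one).

End Alg.

(* Main.v *)
Require Import Defs.
From Stdlib Require Import List.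
Import ListNotations.

Definition incl_ipc (ax : form -> Prop) := forall f, ipc_axiom f -> ax f.

Lemma dax ax G f : incl_ipc ax -> ipc_axiom f -> derivable ax G f.
Proof. intros H Hf. apply d_ax. apply H, Hf. Qed.

Lemma dmp2 ax G a b c : derivable ax G (Imp a (Imp b c)) -> derivable ax G a ->
  derivable ax G b -> derivable ax G c.
Proof. intros H1 H2 H3. eapply d_mp; [eapply d_mp; eauto|]; eauto. Qed.

Lemma ded ax G a b : incl_ipc ax -> derivable ax (a :: G) b -> derivable ax G (Imp a b).
Proof.
  intros Hax D. induction D as [b Hin|b Hb|b c D1 IH1 D2 IH2].
  - destruct Hin as [<-|Hin].
    + eapply d_mp; [eapply d_mp; [apply (dax _ _ _ Hax (ax_S a (Imp a a) a))|
        apply (dax _ _ _ Hax (ax_K a (Imp a a)))]|apply (dax _ _ _ Hax (ax_K a a))].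
    + eapply d_mp; [apply (dax _ _ _ Hax (ax_K b a))|apply d_hyp; exact Hin].
  - eapply d_mp; [apply (dax _ _ _ Hax (ax_K b a))|apply d_ax; exact Hb].
  - eapply dmp2; [apply (dax _ _ _ Hax (ax_S a b c))|exact IH1|exact IH2].
Qed.

Ltac ip := first [ assumption | constructor ].
Lemma dandI ax G a b : incl_ipc ax -> derivable ax G a -> derivable ax G b -> derivable ax G (And a b).
Proof. intros H ? ?. apply (dmp2 ax G a b (And a b)); auto. apply dax; auto; constructor. Qed.
Lemma dandE1 ax G a b : incl_ipc ax -> derivable ax G (And a b) -> derivable ax G a.
Proof. intros H ?. eapply d_mp; eauto. apply dax; auto; constructor. Qed.
Lemma dandE2 ax G a b : incl_ipc ax -> derivable ax G (And a b) -> derivable ax G b.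
Proof. intros H ?. eapply d_mp; eauto. apply dax; auto; constructor. Qed.
Lemma dorI1 ax G a b : incl_ipc ax -> derivable ax G a -> derivable ax G (Or a b).
Proof. intros H ?. eapply d_mp; eauto. apply dax; auto; constructor. Qed.
Lemma dorI2 ax G a b : incl_ipc ax -> derivable ax G b -> derivable ax G (Or a b).
Proof. intros H ?. eapply d_mp; eauto. apply dax; auto; constructor. Qed.
Lemma dorE ax G a b c : incl_ipc ax -> derivable ax G (Or a b) ->
  derivable ax (a :: G) c -> derivable ax (b :: G) c -> derivable ax G c.
Proof.
  intros H H1 H2 H3. eapply d_mp; [|exact H1]. apply (dmp2 ax G (Imp a c) (Imp b c)); [|apply ded; eauto|apply ded; eauto].
  apply dax; auto; constructor.
Qed.
Lemma dbot ax G a : incl_ipc ax -> derivable ax G Bot -> derivable ax G a.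
Proof. intros H ?. eapply d_mp; eauto. apply dax; auto; constructor. Qed.
Lemma dh ax G a : In a G -> derivable ax G a.
Proof. apply d_hyp. Qed.

Definition vv {A} (x y z : A) (n : nat) : A :=
  match n with 0 => x | 1 => y | _ => z end.
Definition P := Var 0. Definition Q := Var 1. Definition R := Var 2.

Section S.
Context (A : Type) (zero one : A) (meet join imp : A -> A -> A).
Context (ax : form -> Prop).

Notation le := (le A meet).

Lemma heyting_part :
  is_alg_interp A one meet -> incl_ipc ax ->
  consistent_with A zero one meet join imp (derivable ax) ->
  is_heyting_algebra A zero one meet join imp.
Proof.
  intros [Hrefl [Hanti [Htrans Htop]]] Hax HC.
  assert (one_hyp : forall v psi phi, derivable ax [psi] phi ->
      le (eval A zero one meet join imp v psi) (eval A zero one meet join imp v phi)).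
  { intros v psi phi D. apply (HC _ _ D v). intros ? [<-|[]]. apply Hrefl. }
  assert (lb1 : forall a b, le (meet a b) a).
  { intros a b. apply (one_hyp (vv a b a) (And P Q) P).
    eapply dandE1; eauto. apply dh; simpl; auto. }
  assert (lb2 : forall a b, le (meet a b) b).
  { intros a b. apply (one_hyp (vv a b a) (And P Q) Q).
    eapply dandE2; eauto. apply dh; simpl; auto. }
  assert (glb : forall a b c, le c a -> le c b -> le c (meet a b)).
  { intros a b c H1 H2.
    apply (HC [P; Q] (And P Q)) with (v := vv a b a).
    - apply dandI; auto; apply dh; simpl; auto.
    - intros ? [<-|[<-|[]]]; assumption. }
  assert (ub1 : forall a b, le a (join a b)).
  { intros a b. apply (one_hyp (vv a b a) P (Or P Q)).
    eapply dorI1; eauto. apply dh; simpl; auto. }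
  assert (ub2 : forall a b, le b (join a b)).
  { intros a b. apply (one_hyp (vv a b a) Q (Or P Q)).
    eapply dorI2; eauto. apply dh; simpl; auto. }
  assert (z : forall a, le zero a).
  { intros a. apply (one_hyp (vv a a a) Bot P).
    eapply dbot; eauto. apply dh; simpl; auto. }
  assert (ielim : forall a b c, le c (imp a b) -> le (meet c a) b).
  { intros a b c H.
    apply (HC [Imp P Q; P] Q) with (v := vv a b a).
    - eapply d_mp; apply dh; simpl; auto.
    - intros ? [<-|[<-|[]]]; simpl. eapply Htrans; [apply lb1|exact H]. apply lb2. }
  assert (iintro : forall x a c, le (meet x a) c -> le x (imp a c)).
  { intros x a c H.
    assert (S1 : le x (imp a (meet x a))).
    { apply (one_hyp (vv x a c) P (Imp Q (And P Q))).
      apply ded; auto. apply dandI; auto; apply dh; simpl; auto. }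
    assert (S2 : le (imp a (meet (meet x a) c)) (imp a c)).
    { apply (one_hyp (vv x a c) (Imp Q (And (And P Q) R)) (Imp Q R)).
      apply ded; auto. eapply dandE2; auto. eapply d_mp; apply dh; simpl; eauto. }
    unfold Defs.le in H. rewrite H in S2. eapply Htrans; eauto. }
  assert (lub : forall a b c, le a c -> le b c -> le (join a b) c).
  { intros a b c H1 H2.
    assert (I1 : le one (imp a c)) by (apply iintro; eapply Htrans; [apply lb2|exact H1]).
    assert (I2 : le one (imp b c)) by (apply iintro; eapply Htrans; [apply lb2|exact H2]).
    apply (HC [Imp P R; Imp Q R; Or P Q] R) with (v := vv a b c).
    - apply (dorE _ _ P Q); auto. apply dh; simpl; auto.
      + apply (d_mp _ _ P R); apply dh; simpl; auto.
      + apply (d_mp _ _ Q R); apply dh; simpl; auto.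
    - intros ? [<-|[<-|[<-|[]]]]; simpl.
      + eapply Htrans; [apply Htop|exact I1].
      + eapply Htrans; [apply Htop|exact I2].
      + apply Hrefl. }
  split; [repeat split; auto|].
  intros a b c; split; auto.
Qed.

End S.

Lemma ipc_cpc ax1 ax2 G f : (forall g, ax1 g -> ax2 g) -> derivable ax1 G f -> derivable ax2 G f.
Proof.
  intros H D; induction D; [apply d_hyp|apply d_ax|eapply d_mp]; eauto.
Qed.

Theorem theorem3 (A : Type) (zero one : A) (meet join imp : A -> A -> A) :
  is_alg_interp A one meet ->
  (consistent_with A zero one meet join imp IPC_entails ->
     is_heyting_algebra A zero one meet join imp) /\
  (consistent_with A zero one meet join imp CPC_entails ->
     is_boolean_algebra A zero one meet join (fun a => imp a zero)).
Proof.
  intros Halg. split.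
  - intros HC. eapply heyting_part; eauto. intros f Hf; exact Hf.
  - intros HC.
    assert (Hax : incl_ipc cpc_axiom) by (intros f Hf; apply ax_ipc, Hf).
    assert (HI := heyting_part A zero one meet join imp cpc_axiom Halg Hax HC).
    destruct Halg as [Hrefl [Hanti [Htrans Htop]]].
    assert (one_hyp : forall v psi phi, derivable cpc_axiom [psi] phi ->
      le A meet (eval A zero one meet join imp v psi) (eval A zero one meet join imp v phi)).
    { intros v psi phi D. apply (HC _ _ D v). intros ? [<-|[]]. apply Hrefl. }
    destruct HI as [HL HH]. split; [exact HL|].
    destruct HL as [_ [_ [_ [_ [_ [_ [_ [Hz _]]]]]]]].
    split.
    + intros a b c. apply Hanti.
      * apply (one_hyp (vv a b c) (And P (Or Q R)) (Or (And P Q) (And P R))).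
        eapply dorE; auto. eapply dandE2; auto; apply dh; simpl; eauto.
        -- apply dorI1; auto. apply dandI; auto. eapply dandE1; auto; apply dh; simpl; eauto.
           apply dh; simpl; auto.
        -- apply dorI2; auto. apply dandI; auto. eapply dandE1; auto; apply dh; simpl; eauto.
           apply dh; simpl; auto.
      * apply (one_hyp (vv a b c) (Or (And P Q) (And P R)) (And P (Or Q R))).
        eapply dorE; auto. apply dh; simpl; eauto.
        -- apply dandI; auto. eapply dandE1; auto; apply dh; simpl; eauto.
           apply dorI1; auto. eapply dandE2; auto; apply dh; simpl; eauto.
        -- apply dandI; auto. eapply dandE1; auto; apply dh; simpl; eauto.
           apply dorI2; auto. eapply dandE2; auto; apply dh; simpl; eauto.
    + intros a; split; apply Hanti.
      * apply (one_hyp (vv a a a) (And P (Imp P Bot)) Bot).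
        eapply d_mp; [eapply dandE2|eapply dandE1]; auto; apply dh; simpl; eauto.
      * apply Hz.
      * apply Htop.
      * apply (HC [] (Or P (Imp P Bot))) with (v := vv a a a).
        -- apply d_ax, ax_lem.
        -- intros ? [].
Qed.
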